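(* Let $T_{skewcw,2}=\sum_{\sigma\in S_3}\operatorname{sgn}(\sigma)\, e_{\sigma(1)}\otimes e_{\sigma(2)}\otimes e_{\sigma(3)}\in \Lambda^3\mathbb{C}^3\subset\mathbb{C}^3\otimes\mathbb{C}^3\otimes\mathbb{C}^3$ (where $e_1,e_2,e_3$ is a basis of $\mathbb{C}^3$), and let $W=a_1\otimes b_1\otimes c_2+a_1\otimes b_2\otimes c_1+a_2\otimes b_1\otimes c_1\in\mathbb{C}^2\otimes\mathbb{C}^2\otimes\mathbb{C}^2$ (with $\{a_i\},\{b_j\},\{c_k\}$ bases of the three copies of $\mathbb{C}^2$). Then the Kronecker product $T_{skewcw,2}\boxtimes W\in\mathbb{C}^6\otimes\mathbb{C}^6\otimes\mathbb{C}^6$ has border rank nine.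
   Context: The border rank of a tensor is the smallest $s$ such that it is a limit of tensors that are sums of $s$ tensors of the form $a\otimes b\otimes c$. For $T\in A\otimes B\otimes C$ and $T'\in A'\otimes B'\otimes C'$, the Kronecker product $T\boxtimes T'$ is $T\otimes T'$ regarded as an element of $(A\otimes A')\otimes(B\otimes B')\otimes(C\otimes C')$. *)

(* Defs.v *)
(* Complex numbers are R[i] (mathcomp-real-closed) for
   an arbitrary R : realType (complete archimedean field, i.e. a copy of the reals). *)
From mathcomp Require Import all_boot all_order all_algebra all_fingroup.
From mathcomp Require Import reals.
From mathcomp.real_closed Require Import complex.
Set Implicit Arguments. Unset Strict Implicit. Unset Printing Implicit Defensive.
Import Order.TTheory GRing.Theory Num.Theory.
Local Open Scope ring_scope.

Section Tensors.
Variable C : numClosedFieldType.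

Definition tensor3 (I J K : finType) := I -> J -> K -> C.

Definition simple_tensor (I J K : finType) (a : I -> C) (b : J -> C) (c : K -> C)
  : tensor3 I J K := fun i j k => a i * b j * c k.

Definition basis_vec (I : finType) (x : I) : I -> C := fun i => (i == x)%:R.

Definition rank_le (I J K : finType) (T : tensor3 I J K) (s : nat) : Prop :=
  exists (a : 'I_s -> I -> C) (b : 'I_s -> J -> C) (c : 'I_s -> K -> C),
    forall i j k, T i j k = \sum_(l < s) simple_tensor (a l) (b l) (c l) i j k.

(* coordinatewise (equivalently, in any norm) convergence of a sequence of tensors *)
Definition tensor_cvg (I J K : finType) (u : nat -> tensor3 I J K) (T : tensor3 I J K)
  : Prop :=
  forall e : C, 0 < e -> exists N : nat, forall n, (N <= n)%N ->
    forall i j k, `|u n i j k - T i j k| < e.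

Definition border_rank_le (I J K : finType) (T : tensor3 I J K) (s : nat) : Prop :=
  exists u : nat -> tensor3 I J K, (forall n, rank_le (u n) s) /\ tensor_cvg u T.

Definition has_border_rank (I J K : finType) (T : tensor3 I J K) (s : nat) : Prop :=
  border_rank_le T s /\ forall s', border_rank_le T s' -> (s <= s')%N.

(* Kronecker product: T (x) T' regarded in (A(x)A') (x) (B(x)B') (x) (C(x)C'),
   the bases of A(x)A' etc. being the product bases indexed by pairs *)
Definition kron (I J K I' J' K' : finType) (T : tensor3 I J K) (T' : tensor3 I' J' K')
  : tensor3 (I * I')%type (J * J')%type (K * K')%type :=
  fun i j k => T i.1 j.1 k.1 * T' i.2 j.2 k.2.

Definition T_skewcw2 : tensor3 'I_3 'I_3 'I_3 :=
  fun i j k => \sum_(s : 'S_3) (-1) ^+ s *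
    simple_tensor (basis_vec (s (inord 0))) (basis_vec (s (inord 1)))
                  (basis_vec (s (inord 2))) i j k.

(* W = a1 b1 c2 + a1 b2 c1 + a2 b1 c1  (index 0 = subscript 1, index 1 = subscript 2) *)
Definition W_tensor : tensor3 'I_2 'I_2 'I_2 :=
  fun i j k =>
    simple_tensor (basis_vec (inord 0)) (basis_vec (inord 0)) (basis_vec (inord 1)) i j k
  + simple_tensor (basis_vec (inord 0)) (basis_vec (inord 1)) (basis_vec (inord 0)) i j k
  + simple_tensor (basis_vec (inord 1)) (basis_vec (inord 0)) (basis_vec (inord 0)) i j k.

End Tensors.

(* Main.v *)
Require Import Defs.
From mathcomp Require Import all_boot all_order all_algebra all_fingroup.
From mathcomp Require Import reals.
From mathcomp.real_closed Require Import complex.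
From mathcomp Require Import ring zify.
Set Implicit Arguments. Unset Strict Implicit. Unset Printing Implicit Defensive.
Import Order.TTheory GRing.Theory Num.Theory.
Local Open Scope ring_scope.

Section S.
Variable C : numClosedFieldType.

Definition epsn (i j k : nat) : int :=
  match i, j, k with
  | 0, 1, 2 => Posz 1 | 1, 2, 0 => Posz 1 | 2, 0, 1 => Posz 1
  | 0, 2, 1 => Negz 0 | 2, 1, 0 => Negz 0 | 1, 0, 2 => Negz 0
  | _, _, _ => Posz 0 end%N.

Lemma swap_gen (x y : 'I_3) (F : 'S_3 -> C) : x != y ->
  \sum_(s : 'S_3) (-1) ^+ s * F s = - \sum_(s : 'S_3) (-1) ^+ s * F (tperm x y * s)%g.
Proof.
move=> hxy; rewrite -sumrN (reindex_inj (mulgI (tperm x y))) /=.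
apply: eq_bigr => s _.
by rewrite odd_permM odd_tperm hxy /= signrN mulNr.
Qed.

Let i0 : 'I_3 := inord 0.
Let i1 : 'I_3 := inord 1.
Let i2 : 'I_3 := inord 2.
Lemma i01 : i0 != i1. Proof. by rewrite -val_eqE /= !inordK. Qed.
Lemma i12 : i1 != i2. Proof. by rewrite -val_eqE /= !inordK. Qed.
Lemma i02 : i0 != i2. Proof. by rewrite -val_eqE /= !inordK. Qed.

Lemma TskE i j k : T_skewcw2 C i j k =
  \sum_(s : 'S_3) (-1) ^+ s * ((i == s i0)%:R * (j == s i1)%:R * (k == s i2)%:R).
Proof. by []. Qed.

Lemma Tsk_sw01 i j k : T_skewcw2 C i j k = - T_skewcw2 C j i k.
Proof.
rewrite !TskE (swap_gen _ i01); congr (- _); apply: eq_bigr => s _.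
by rewrite !permM tpermL tpermR tpermD ?i02 ?i12 // [(i == _)%:R * _]mulrC.
Qed.

Lemma Tsk_sw12 i j k : T_skewcw2 C i j k = - T_skewcw2 C i k j.
Proof.
rewrite !TskE (swap_gen _ i12); congr (- _); apply: eq_bigr => s _.
rewrite !permM tpermL tpermR tpermD; last 2 first.
- by rewrite eq_sym i01.
- by rewrite eq_sym i02.
by rewrite -!mulrA [(j == _)%:R * _]mulrC.
Qed.

Lemma Trep01 i k : T_skewcw2 C i i k = 0.
Proof.
rewrite TskE big1 // => s _.
case: (i =P s i0) => [e0|]; last by rewrite /= ?(mulr0n, mul0r, mulr0).
case: (i =P s i1) => [e1|]; last by rewrite /= ?(mulr0n, mul0r, mulr0).
by case/eqP: i01; apply: (@perm_inj _ s); rewrite -e0 -e1.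
Qed.

Lemma Trep12 i j : T_skewcw2 C i j j = 0.
Proof.
rewrite TskE big1 // => s _.
case: (j =P s i1) => [e0|]; last by rewrite /= ?(mulr0n, mul0r, mulr0).
case: (j =P s i2) => [e1|]; last by rewrite /= ?(mulr0n, mul0r, mulr0).
by case/eqP: i12; apply: (@perm_inj _ s); rewrite -e0 -e1.
Qed.

Lemma Trep02 i j : T_skewcw2 C i j i = 0.
Proof. by rewrite Tsk_sw01 Trep12 oppr0. Qed.

Lemma ord3 (x : 'I_3) : [\/ x = i0, x = i1 | x = i2].
Proof.
case: x => [[|[|[|//]]] h]; [apply: Or31|apply: Or32|apply: Or33]; apply: val_inj; by rewrite /= inordK.
Qed.

Lemma T012 : T_skewcw2 C i0 i1 i2 = 1.
Proof.
rewrite TskE (bigD1 1%g) //= big1 ?addr0.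
  by rewrite odd_perm1 !perm1 !eqxx !mulr1.
move=> s hs; case: (i0 =P s i0) => [e0|]; last by rewrite /= ?(mulr0n, mul0r, mulr0).
case: (i1 =P s i1) => [e1|]; last by rewrite /= ?(mulr0n, mul0r, mulr0).
case: (i2 =P s i2) => [e2|]; last by rewrite /= ?(mulr0n, mul0r, mulr0).
move: hs; suff -> : s = 1%g by rewrite eqxx.
by apply/permP => x; rewrite perm1; case: (ord3 x) => ->.
Qed.

Definition eps3 (i j k : 'I_3) : int := epsn i j k.

Lemma TskV i j k : T_skewcw2 C i j k = (eps3 i j k)%:~R.
Proof.
rewrite /eps3; case: (ord3 i) => ->; case: (ord3 j) => ->; case: (ord3 k) => ->;
rewrite ?Trep01 ?Trep12 ?Trep02 /= ?inordK //;
 rewrite ?(Tsk_sw01 i1 i0 i2) ?(Tsk_sw12 i0 i2 i1) ?(Tsk_sw01 i2 i1 i0) ?(Tsk_sw12 i1 i2 i0)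
   ?(Tsk_sw01 i1 i0 i2) ?(Tsk_sw01 i2 i0 i1) ?(Tsk_sw12 i0 i2 i1) ?T012 ?opprK //.
Qed.

Lemma bvE (I : finType) (x i : I) : basis_vec C x i = (i == x)%:R.
Proof. by []. Qed.

Lemma WV (i j k : 'I_2) : W_tensor C i j k = ((i + j + k)%N == 1%N)%:R.
Proof.
have o2 : forall x : 'I_2, x = inord 0 \/ x = inord 1.
  by case=> [[|[|//]] h]; [left|right]; apply: val_inj; rewrite /= inordK.
rewrite /W_tensor /simple_tensor !bvE.
case: (o2 i) => ->; case: (o2 j) => ->; case: (o2 k) => ->;
  rewrite ?eqxx /= ?inordK // -?val_eqE /= ?inordK //=;
  rewrite ?(mulr1, mul1r, mulr0, mul0r, addr0, add0r, mulr0n, mulr1n) //.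
Qed.
End S.

Definition Kn (p j1 j2 q k1 k2 : nat) : int :=
  (\sum_(0 <= i < 3) epsn i j1 k1 * epsn i p q) * ((j2 + k2 == 1)%N)%:Z.
Definition Nn (q k1 k2 r m1 m2 : nat) : int :=
  (((q == k1) && (r == m1))%:Z - 2 * ((q == m1) && (k1 == r))%:Z) * ((k2 + m2 == 1)%N)%:Z.
Definition KNsum (p j1 j2 r m1 m2 : nat) : int :=
  \sum_(0 <= q < 3) \sum_(0 <= k1 < 3) \sum_(0 <= k2 < 2)
     Kn p j1 j2 q k1 k2 * Nn q k1 k2 r m1 m2.
Lemma KNcheck : all (fun p => all (fun j1 => all (fun j2 => all (fun r => all (fun m1 => all (fun m2 =>
  KNsum p j1 j2 r m1 m2 == 2 * [&& p == r, j1 == m1 & j2 == m2]%:Z)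
  (iota 0 2)) (iota 0 3)) (iota 0 3)) (iota 0 2)) (iota 0 3)) (iota 0 3).
Proof. rewrite /KNsum /Kn unlock. vm_compute. reflexivity. Qed.
Lemma epscheck : all (fun i => all (fun j => all (fun k => `|epsn i j k| <= 1) (iota 0 3)) (iota 0 3)) (iota 0 3).
Proof. vm_compute. reflexivity. Qed.
Lemma Ncheck : all (fun q => all (fun k1 => all (fun k2 => all (fun r => all (fun m1 => all (fun m2 =>
  `|Nn q k1 k2 r m1 m2| <= 2) (iota 0 2)) (iota 0 3)) (iota 0 3)) (iota 0 2)) (iota 0 3)) (iota 0 3).
Proof. vm_compute. reflexivity. Qed.

Definition Al : seq (seq int) := [:: [:: -4; 4; -4]; [:: 0; -4; 0]; [:: 0; 0; 4]; [:: 0; 4; -4];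
  [:: -4; 0; 0]; [:: -1; -1; -1]; [:: 1; 1; -1]; [:: 1; -1; 1]; [:: -1; 1; 1]].
Definition Bl : seq (seq int) := [:: [:: 0; 0; 1]; [:: 1; 0; 0]; [:: 1; -1; 1]; [:: 1; 0; 1];
  [:: 0; 1; 0]; [:: 1; 1; -1]; [:: 1; 1; 1]; [:: 1; -1; -1]; [:: -1; 1; -1]].
Definition Cl : seq (seq int) := [:: [:: 0; 1; 0]; [:: 1; -1; 1]; [:: 1; 0; 0]; [:: 1; -1; 0];
  [:: 0; 0; 1]; [:: -1; 1; -1]; [:: -1; 1; 1]; [:: -1; -1; -1]; [:: 1; 1; -1]].
Definition Ll : seq int := [:: 1; 1; 1; 1; -1; 0; 0; 0; 0].
Definition Ad (l i : nat) : int := nth 0 (nth [::] Al l) i.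
Definition Bd (l i : nat) : int := nth 0 (nth [::] Bl l) i.
Definition Cd (l i : nat) : int := nth 0 (nth [::] Cl l) i.
Definition lamd (l : nat) : int := nth 0 Ll l.
Definition Gn (m i j k : nat) : int := \sum_(0 <= l < 9) lamd l ^+ m * Ad l i * Bd l j * Cd l k.

Lemma Gcheck : all (fun i => all (fun j => all (fun k =>
  [&& Gn 0 i j k == 0, Gn 1 i j k == 4 * epsn i j k, `|Gn 2 i j k| <= 4 & `|Gn 3 i j k| <= 4])
  (iota 0 3)) (iota 0 3)) (iota 0 3).
Proof. rewrite /Gn unlock. vm_compute. reflexivity. Qed.

Lemma Gfacts (i j k : 'I_3) :
  [/\ Gn 0 i j k = 0, Gn 1 i j k = 4 * eps3 i j k, `|Gn 2 i j k| <= 4 & `|Gn 3 i j k| <= 4].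
Proof.
have := Gcheck; move/allP/(_ i); rewrite mem_iota ltn_ord => /(_ isT).
move/allP/(_ j); rewrite mem_iota ltn_ord => /(_ isT).
move/allP/(_ k); rewrite mem_iota ltn_ord => /(_ isT).
by case/and4P => /eqP -> /eqP -> -> ->.
Qed.

Section Upper.
Variable C : numClosedFieldType.
Notation I := ('I_3 * 'I_2)%type.

Definition tt (n : nat) : C := (n.+1%:R)^-1.
Definition avec n (l : 'I_9) (i : I) : C :=
  (Ad l i.1)%:~R * ((tt n)^-1 / 4) * (tt n * (lamd l)%:~R) ^+ i.2.
Definition bvec n (l : 'I_9) (j : I) : C := (Bd l j.1)%:~R * (tt n * (lamd l)%:~R) ^+ j.2.
Definition cvec n (l : 'I_9) (k : I) : C := (Cd l k.1)%:~R * (tt n * (lamd l)%:~R) ^+ k.2.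
Definition useq n : tensor3 C I I I := fun i j k =>
  \sum_(l < 9) simple_tensor (avec n l) (bvec n l) (cvec n l) i j k.

Lemma useq_rank n : rank_le (useq n) 9.
Proof. by exists (avec n), (bvec n), (cvec n). Qed.

Lemma useqE n (i j k : I) : useq n i j k =
  (tt n)^-1 / 4 * tt n ^+ (i.2 + j.2 + k.2) * (Gn (i.2 + j.2 + k.2) i.1 j.1 k.1)%:~R.
Proof.
rewrite /useq /Gn big_mkord.
rewrite rmorph_sum mulr_sumr; apply: eq_bigr => l _.
rewrite /simple_tensor /avec /bvec /cvec !rmorphM !rmorphXn /=.
rewrite !exprMn !exprD; ring.
Qed.

Lemma tt_gt0 n : 0 < tt n. Proof. by rewrite /tt invr_gt0 ltr0n. Qed.
Lemma tt_le1 n : tt n <= 1. Proof. by rewrite /tt invf_le1 ?ltr0n // ler1n. Qed.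
Lemma tt_mono m n : (m <= n)%N -> tt n <= tt m.
Proof. by move=> h; rewrite /tt lef_pV2 ?posrE ?ltr0n // ler_nat. Qed.

Lemma norm_G (g : int) : `|g| <= 4 -> `|(g%:~R : C)| <= 4.
Proof.
move=> h; rewrite -intr_norm; apply: le_trans (_ : (4:int)%:~R <= 4).
  by rewrite ler_int.
by rewrite -[4%:~R]/((4%N)%:R%:~R) mulrz_nat.
Qed.

Lemma useq_cvg (harchi : forall e : C, 0 < e -> exists N, tt N < e) :
  tensor_cvg useq (kron (T_skewcw2 C) (W_tensor C)).
Proof.
move=> e he; case: (harchi e he) => N hN; exists N => n hn i j k.
have tn := tt_mono hn; have t0 := tt_gt0 n; have t1 := tt_le1 n.
have tne : tt n != 0 by rewrite gt_eqF.
rewrite useqE /kron TskV WV.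
case: i j k => [i1 i2] [j1 j2] [k1 k2] /=.
have [G0 G1 G2 G3] := Gfacts i1 j1 k1.
have : (i2 + j2 + k2 <= 3)%N.
  by have := ltn_ord i2; have := ltn_ord j2; have := ltn_ord k2; lia.
move: (i2 + j2 + k2)%N => m; case: m => [|[|[|[|//]]]] _.
- by rewrite G0 mulr0 /= mulr0 subr0 normr0.
- rewrite G1 /= mulr1 intrM expr1 /=.
  have -> : (tt n)^-1 / 4 * tt n * ((4:int)%:~R * (eps3 i1 j1 k1)%:~R) = (eps3 i1 j1 k1)%:~R :> C.
    rewrite -[4%:~R]/((4%N)%:R%:~R) mulrz_nat; field; rewrite tne /=.
    done.
  by rewrite [X in `|X|](_ : _ = 0) ?normr0 //; apply/eqP; rewrite subr_eq0.
- rewrite /= mulr0 subr0 normrM normrM ger0_norm ?mulr_ge0 ?invr_ge0 ?ltW //.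
  rewrite normrX ger0_norm ?ltW //.
  have -> : (tt n)^-1 / 4 * tt n ^+ 2 = tt n / 4 by field.
  apply: le_lt_trans hN; apply: le_trans tn.
  apply: le_trans (ler_wpM2l _ (norm_G G2)) _; first by rewrite divr_ge0 ?ltW.
  by rewrite divfK ?pnatr_eq0.
- rewrite /= mulr0 subr0 normrM normrM ger0_norm ?mulr_ge0 ?invr_ge0 ?ltW //.
  rewrite normrX ger0_norm ?ltW //.
  have -> : (tt n)^-1 / 4 * tt n ^+ 3 = tt n ^+ 2 / 4.
    by rewrite !exprS expr0; field.
  apply: le_lt_trans hN; apply: le_trans tn.
  apply: le_trans (ler_wpM2l _ (norm_G G3)) _; first by rewrite divr_ge0 ?exprn_ge0 ?ltW.
  rewrite divfK ?pnatr_eq0 // expr2.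
  by apply: le_trans (ler_wpM2l (ltW t0) t1) _; rewrite mulr1.
Qed.
End Upper.

Section Lower.
Variable C : numClosedFieldType.
Notation I := ('I_3 * 'I_2)%type.
Notation X := ('I_3 * ('I_3 * 'I_2))%type.
Notation n18 := #|{: X}|.

Definition Kf (V : tensor3 C I I I) (a b : X) : C :=
  \sum_(i < 3) V (i, ord0) a.2 b.2 * (eps3 i a.1 b.1)%:~R.
Definition Kmx (V : tensor3 C I I I) : 'M[C]_n18 :=
  \matrix_(a, b) Kf V (enum_val a) (enum_val b).

Lemma sum_delta (T : finType) (x : T) (F : T -> C) :
  \sum_(y : T) (y == x)%:R * F y = F x.
Proof.
rewrite (bigD1 x) //= eqxx mul1r big1 ?addr0 // => y /negbTE ->.
by rewrite mul0r.
Qed.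

Lemma rank_sum (s : nat) (A : 'I_s -> 'M[C]_n18) :
  (\rank (\sum_(l < s) A l)%R <= \sum_(l < s) \rank (A l))%N.
Proof.
elim: s A => [|s IH] A; first by rewrite !big_ord0 mxrank0.
rewrite !big_ord_recr /=.
apply: leq_trans (mxrank_add _ _) _.
by rewrite leq_add2r IH.
Qed.

Lemma eps3_anti (i p q : 'I_3) : eps3 i q p = - eps3 i p q.
Proof.
rewrite /eps3; have := ltn_ord i; have := ltn_ord p; have := ltn_ord q.
move: (i : nat) (p : nat) (q : nat) => x y z.
by case: x => [|[|[|//]]]; case: y => [|[|[|//]]]; case: z => [|[|[|//]]].
Qed.

Lemma skew_rank (M : 'M[C]_3) : M^T = - M -> (\rank M <= 2)%N.
Proof.
move=> hM.
have hd : \det M = 0.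
  have : \det M = - \det M.
    by rewrite -{1}det_tr hM -scaleN1r detZ -signr_odd /= expr1 mulN1r.
  move/eqP; rewrite -subr_eq0 opprK -mulr2n mulrn_eq0 /= => /eqP //.
have : ~~ row_free M by rewrite row_free_unit unitmxE hd unitfE eqxx.
by rewrite /row_free => h; have := rank_leq_row M; rewrite leq_eqVlt (negbTE h).
Qed.

Lemma Kmx_simple (a b c : I -> C) : (\rank (Kmx (simple_tensor a b c)) <= 2)%N.
Proof.
pose M : 'M[C]_3 := \matrix_(p, q) \sum_(i < 3) a (i, ord0) * (eps3 i p q)%:~R.
pose X1 : 'M[C]_(n18, 3) := \matrix_(r, p) ((p == (enum_val r).1)%:R * b (enum_val r).2).
pose Y1 : 'M[C]_(3, n18) := \matrix_(q, s) ((q == (enum_val s).1)%:R * c (enum_val s).2).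
have -> : Kmx (simple_tensor a b c) = X1 *m M *m Y1.
  apply/matrixP => r s; rewrite !mxE.
  under [RHS]eq_bigr => q _ do rewrite !mxE.
  under [RHS]eq_bigr => q _ do under eq_bigr => p _ do rewrite !mxE -mulrA.
  under [RHS]eq_bigr => q _ do rewrite sum_delta mulrC.
  under [RHS]eq_bigr => q _ do rewrite -mulrA.
  rewrite sum_delta /Kf mulr_sumr mulr_sumr; apply: eq_bigr => i _.
  rewrite /simple_tensor; ring.
apply: leq_trans (mxrankM_maxl _ _) _; apply: leq_trans (mxrankM_maxr _ _) _.
apply: skew_rank; apply/matrixP => p q; rewrite !mxE -sumrN; apply: eq_bigr => i _.
by rewrite eps3_anti rmorphN mulrN.
Qed.

Lemma Kmx_rank (V : tensor3 C I I I) s : rank_le V s -> (\rank (Kmx V) <= 2 * s)%N.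
Proof.
case=> a [b [c hV]].
have -> : Kmx V = (\sum_(l < s) Kmx (simple_tensor (a l) (b l) (c l)))%R.
  apply/matrixP => x y; rewrite summxE !mxE /Kf.
  under eq_bigr => i _ do rewrite hV mulr_suml.
  rewrite exchange_big /=; apply: eq_bigr => l _; by rewrite mxE.
apply: leq_trans (rank_sum _) _.
apply: (@leq_trans (\sum_(l < s) 2)%N); first by apply: leq_sum => l _; exact: Kmx_simple.
by rewrite sum_nat_const card_ord mulnC.
Qed.

Definition Tp : tensor3 C I I I := kron (T_skewcw2 C) (W_tensor C).

Definition Nf (x y : X) : C := (Nn x.1 x.2.1 x.2.2 y.1 y.2.1 y.2.2)%:~R / 2.
Definition Nmx : 'M[C]_n18 := \matrix_(a, b) Nf (enum_val a) (enum_val b).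

Lemma KfE (y x : X) : Kf Tp y x = (Kn y.1 y.2.1 y.2.2 x.1 x.2.1 x.2.2)%:~R.
Proof.
rewrite /Kf /Kn /Tp /kron big_mkord rmorphM rmorph_sum mulr_suml; apply: eq_bigr => i _.
rewrite /= TskV WV /eps3 !rmorphM /= -natz mulrz_nat add0n; ring.
Qed.

Lemma sumX (F : nat -> nat -> nat -> int) :
  \sum_(x : X) F x.1 x.2.1 x.2.2 =
  \sum_(0 <= q < 3) \sum_(0 <= k1 < 3) \sum_(0 <= k2 < 2) F q k1 k2.
Proof.
rewrite -(pair_bigA _ (fun (q : 'I_3) (k : I) => F q k.1 k.2)) big_mkord; apply: eq_bigr => q _.
rewrite -(pair_bigA _ (fun (k1 : 'I_3) (k2 : 'I_2) => F q k1 k2)) big_mkord; apply: eq_bigr => k1 _.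
by rewrite big_mkord.
Qed.

Lemma KNval (p j1 r m1 : 'I_3) (j2 m2 : 'I_2) :
  KNsum p j1 j2 r m1 m2 = 2 * [&& (p == r :> nat), (j1 == m1 :> nat) & (j2 == m2 :> nat)]%:Z.
Proof.
have := KNcheck.
move/allP/(_ p); rewrite mem_iota ltn_ord => /(_ isT).
move/allP/(_ j1); rewrite mem_iota ltn_ord => /(_ isT).
move/allP/(_ j2); rewrite mem_iota ltn_ord => /(_ isT).
move/allP/(_ r); rewrite mem_iota ltn_ord => /(_ isT).
move/allP/(_ m1); rewrite mem_iota ltn_ord => /(_ isT).
move/allP/(_ m2); rewrite mem_iota ltn_ord => /(_ isT).
by move/eqP.
Qed.

Lemma KN (y z : X) : \sum_(x : X) Kf Tp y x * Nf x z = (y == z)%:R.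
Proof.
have -> : \sum_(x : X) Kf Tp y x * Nf x z =
    (\sum_(x : X) Kn y.1 y.2.1 y.2.2 x.1 x.2.1 x.2.2 * Nn x.1 x.2.1 x.2.2 z.1 z.2.1 z.2.2)%:~R / 2.
  by rewrite rmorph_sum mulr_suml; apply: eq_bigr => x _; rewrite KfE /Nf rmorphM mulrA.
rewrite (sumX (fun q k1 k2 => Kn y.1 y.2.1 y.2.2 q k1 k2 * Nn q k1 k2 z.1 z.2.1 z.2.2)).
rewrite -/(KNsum _ _ _ _ _ _).
case: y z => [p [j1 j2]] [r [m1 m2]] /=.
rewrite KNval !xpair_eqE /= rmorphM /=.
case: [&& _, _ & _]; rewrite /= ?mulr0 ?mul0r //.
by rewrite mulr1 divff // pnatr_eq0.
Qed.

Lemma sum_ev (F : X -> C) : \sum_(x : X) F x = \sum_(i < n18) F (enum_val i).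
Proof. by rewrite (reindex (@enum_val X {: X})) //=; apply: onW_bij; exact: enum_val_bij. Qed.

Lemma KNmx : Kmx Tp *m Nmx = 1%:M.
Proof.
apply/matrixP => a b; rewrite !mxE.
under eq_bigr do rewrite !mxE.
rewrite -(sum_ev (fun x => Kf Tp (enum_val a) x * Nf x (enum_val b))).
by rewrite KN (inj_eq enum_val_inj).
Qed.

Lemma Kmx_lin (V : tensor3 C I I I) :
  Kmx V = Kmx Tp + Kmx (fun i j k => V i j k - Tp i j k).
Proof.
apply/matrixP => a b; rewrite !mxE /Kf -big_split; apply: eq_bigr => i _ /=; ring.
Qed.

Lemma eps_norm (i j k : 'I_3) : `|(eps3 i j k)%:~R : C| <= 1.
Proof.
have := epscheck.
move/allP/(_ i); rewrite mem_iota ltn_ord => /(_ isT).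
move/allP/(_ j); rewrite mem_iota ltn_ord => /(_ isT).
move/allP/(_ k); rewrite mem_iota ltn_ord => /(_ isT) => h.
rewrite -(ler_int C) in h; rewrite -intr_norm /eps3; apply: le_trans h _; by rewrite rmorph1.
Qed.

Lemma Nf_norm (x y : X) : `|Nf x y| <= 1.
Proof.
case: x y => [q [k1 k2]] [r [m1 m2]] /=; have := Ncheck.
move/allP/(_ q); rewrite mem_iota ltn_ord => /(_ isT).
move/allP/(_ k1); rewrite mem_iota ltn_ord => /(_ isT).
move/allP/(_ k2); rewrite mem_iota ltn_ord => /(_ isT).
move/allP/(_ r); rewrite mem_iota ltn_ord => /(_ isT).
move/allP/(_ m1); rewrite mem_iota ltn_ord => /(_ isT).
move/allP/(_ m2); rewrite mem_iota ltn_ord => /(_ isT) => h.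
rewrite /Nf /= normrM normfV -intr_norm normr_nat ler_pdivrMr ?ltr0n // mul1r.
by rewrite -(ler_int C) in h; apply: le_trans h _; rewrite mulrz_nat.
Qed.

Lemma Kf_norm (V : tensor3 C I I I) (d : C) (x y : X) :
  (forall i j k, `|V i j k| <= d) -> `|Kf V x y| <= 3%:R * d.
Proof.
move=> hV; rewrite /Kf; apply: le_trans; first exact: ler_norm_sum.
apply: le_trans (_ : \sum_(i < 3) d <= _); last by rewrite sumr_const card_ord mulr_natl.
apply: ler_sum => i _; rewrite normrM.
have d0 : 0 <= d by exact: le_trans (normr_ge0 _) (hV (i, ord0) x.2 y.2).
by rewrite -[d]mulr1 ler_pM ?eps_norm.
Qed.

Definition d0 : C := ((4 * n18 ^ 2)%N%:R)^-1.

Lemma n18E : n18 = 18%N. Proof. by rewrite !card_prod !card_ord. Qed.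

Lemma d0_gt0 : 0 < d0.
Proof. by rewrite /d0 n18E invr_gt0 ltr0n. Qed.

Lemma Kmx_full (V : tensor3 C I I I) :
  (forall i j k, `|V i j k - Tp i j k| < d0) -> (n18 <= \rank (Kmx V))%N.
Proof.
move=> hV; set D := fun i j k => V i j k - Tp i j k.
have KV : Kmx V *m Nmx = 1%:M + Kmx D *m Nmx by rewrite {1}Kmx_lin mulmxDl KNmx.
suff hu : Kmx V *m Nmx \in unitmx.
  by rewrite -{1}(mxrank_unit hu); apply: mxrankM_maxl.
set E := Kmx D *m Nmx.
set delta : C := n18%:R * (3%:R * d0).
have hE : forall a b, `|E a b| <= delta.
  move=> a b; rewrite /E mxE; apply: le_trans; first exact: ler_norm_sum.
  apply: le_trans (_ : \sum_(c < n18) (3%:R * d0) <= _); last by rewrite sumr_const card_ord /delta [X in _ <= X]mulr_natl.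
  apply: ler_sum => c _; rewrite !mxE normrM -[X in _ <= X]mulr1 ler_pM ?Nf_norm //.
  by apply: Kf_norm => i j k; apply: ltW; apply: hV.
rewrite unitmxE unitfE; apply/negP => /det0P [v vn0].
rewrite KV mulmxDr mulmx1 => hv.
set S := \sum_(a < n18) `|v 0 a|.
have S0 : 0 <= S by apply: sumr_ge0 => a _; exact: normr_ge0.
have hvb : forall b, `|v 0 b| <= delta * S.
  move=> b; have := congr1 (fun M : 'rV[C]_n18 => M 0 b) hv; rewrite !mxE => e.
  have -> : v 0 b = - \sum_(a < n18) v 0 a * E a b.
    by apply/eqP; rewrite -addr_eq0 e.
  rewrite normrN; apply: le_trans; first exact: ler_norm_sum.
  rewrite /S mulr_sumr; apply: ler_sum => a _; rewrite normrM mulrC.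
  by apply: ler_wpM2r; [exact: normr_ge0 | exact: hE].
have hS : S <= n18%:R * delta * S.
  apply: le_trans (_ : \sum_(b < n18) (delta * S) <= _); first by apply: ler_sum => b _; exact: hvb.
  by rewrite sumr_const card_ord -mulrA (mulr_natl (delta * S)).
have hk : n18%:R * delta < 1.
  rewrite /delta /d0 n18E mulrA mulrA -!natrM ltr_pdivrMr ?ltr0n // mul1r ltr_nat.
  by [].
have S_0 : S = 0.
  have : (1 - n18%:R * delta) * S <= 0 by rewrite mulrBl mul1r subr_le0.
  rewrite pmulr_rle0 ?subr_gt0 // => hS'.
  by apply/eqP; rewrite eq_le hS' S0.
move/negP: vn0; apply; apply/eqP/matrixP => i b; rewrite ord1 mxE.
have h0 := psumr_eq0P (fun a _ => normr_ge0 (v 0 a)) S_0.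
by apply/eqP; rewrite -normr_eq0 h0.
Qed.
End Lower.

Lemma lower (C : numClosedFieldType) (s : nat) : border_rank_le (Tp C) s -> (9 <= s)%N.
Proof.
case=> u [hr hc]; case: (hc _ (d0_gt0 C)) => N hN.
have h1 := Kmx_full (fun i j k => hN N (leqnn N) i j k).
have h2 := Kmx_rank (hr N).
have := leq_trans h1 h2; rewrite n18E; lia.
Qed.

Local Open Scope complex_scope.
Lemma archiC (R : realType) (e : R[i]) : 0 < e -> exists N, @tt R[i] N < e.
Proof.
case: e => a b; rewrite ltcE /= => /andP [/eqP hb ha].
have hb0 : b = 0 by rewrite hb.
subst b; rewrite complexr0.
have ha' : 0 <= a^-1 by rewrite invr_ge0 ltW.
exists (Num.bound a^-1).
rewrite /tt -(rmorph_nat (real_complex R)) -fmorphV ltcR.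
rewrite -(invrK a) ltf_pV2 ?posrE ?ltr0n ?invr_gt0 //.
rewrite invrK; apply: lt_le_trans (archi_boundP ha') _; by rewrite ler_nat.
Qed.

Theorem mainTheorem3 (R : realType) :
  has_border_rank (kron (T_skewcw2 R[i]) (W_tensor R[i])) 9.
Proof.
split; last by move=> s'; exact: lower.
exists (@useq R[i]); split; first exact: useq_rank.
apply: useq_cvg; exact: archiC.
Qed.
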